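(* Fix integers $T\ge 3$, $\Delta t\ge 1$ and probabilities $p_0,q_0\in(0,1)$, and consider observations $y^1,\dots,y^T$ generated by the relaxed change model described in the context. For $3\le t\le T$, $0\le r\le t-3$ and $0\le r'\le\min\{\Delta t-1,\,t-r-3\}$ define $$\mathbb{G}^t_a(r',r)=\Pr\big(\bm{y}^{1:t},\ r^t=r,\ a^{t-r}=1,\ c^{t-r-1-r'}=1,\ c^s=0 \text{ for all } t-r-1-r'<s<t-r\big),$$ i.e. the most recent change is at time $t-r$ and ends a collective anomaly whose start (the preceding change) is at time $(t-r-1)-r'$. Then $\mathbb{G}^3_a(0,0)=\mathbb{L}(y^1)\mathbb{L}(y^2)\mathbb{L}(y^3)\,p_0q_0$, and for every $3<t\le T$: $$\mathbb{G}^t_a(r',r)=\begin{cases}\mathbb{G}^{t-1}_a(r',r-1)\,\mathbb{P}(y^t\mid\bm{y}^{(t-r):(t-1)})\,(1-p_0), & r>0,\\ \mathbb{H}^{t-1}_c(r')\,\mathbb{L}(y^t)\,q_0, & r=0,\end{cases}$$ where $\mathbb{H}^{t-1}_c(r')=\Pr(\bm{y}^{1:(t-1)},\,r^{t-1}=r',\,a^{t-1-r'}=0)$.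
   Context: Relaxed change model: binary variables $c^t,a^t$ ($t=1,\dots,T$) with $c^1=1$, $a^1=0$. For $t>1$, call $t$ ''open'' if there is $t'\in\{t-\Delta t,\dots,t-1\}\setminus\{1\}$, $t'\ge 1$, with $c^{t'}=1$, $a^{t'}=0$ and $c^s=0$ for all $t'<s\le t-1$. Given the past, $c^t=1$ with probability $q_0$ if $t$ is open and $p_0$ otherwise; $a^t=1$ if $c^t=1$ and $t$ is open, and $a^t=0$ otherwise. Given a parametric density family $\Pr(y\mid\theta)$ and a prior $\Pr(\theta\mid\pi_0)$: $\theta^1$ is drawn from the prior; for $t>1$, $\theta^t=\theta^{t-1}$ if $c^t=0$, and $\theta^t$ is drawn independently from the prior if $c^t=1$; given $\theta^t$, $y^t\sim\Pr(\cdot\mid\theta^t)$ independently. $\Pr(\bm{y}^{1:t},E)$ denotes the joint density of $y^1,\dots,y^t$ together with the event $E$. Marginal likelihoods: for $1\le a\le b$, $\mathbb{L}(\bm{y}^{a:b})=\int\prod_{s=a}^b\Pr(y^s\mid\theta)\Pr(\theta\mid\pi_0)\,d\theta$ (with $\mathbb{L}(y^b)=\mathbb{L}(\bm{y}^{b:b})$), and for $a<b$, $\mathbb{P}(y^b\mid\bm{y}^{a:(b-1)})=\mathbb{L}(\bm{y}^{a:b})/\mathbb{L}(\bm{y}^{a:(b-1)})$. Run length: $r^t=t-\max\{s\le t: c^s=1\}$. *)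

(* Defs.v *)
From HB Require Import structures.
From mathcomp Require Import all_boot all_order all_algebra.
From mathcomp Require Import all_classical all_reals all_analysis.
Set Implicit Arguments. Unset Strict Implicit. Unset Printing Implicit Defensive.
Import Order.TTheory GRing.Theory Num.Theory.

(* Relaxed change model: the change indicators c^1..c^t are encoded by    *)
(* a function c : nat -> bool (only times 1..t matter).                   *)

Definition is_open (Dt : nat) (c A : nat -> bool) (t : nat) : bool :=
  [exists t' : 'I_t, [&& (2 <= t')%N, (t - Dt <= t')%N, c t', ~~ A t' &
      [forall s : 'I_t, (t' < s)%N ==> ~~ c s]]].

(* aux Dt c n s = a^s for all s <= n (computed recursively in time). *)
Fixpoint aux (Dt : nat) (c : nat -> bool) (n : nat) : nat -> bool :=
  match n with
  | 0 => fun _ => false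
  | n'.+1 => let A := aux Dt c n' in
             fun s => if s == n'.+1 then c s && is_open Dt c A s else A s
  end.

Definition anom (Dt : nat) (c : nat -> bool) (t : nat) : bool := aux Dt c t t.

Definition openb (Dt : nat) (c : nat -> bool) (t : nat) : bool :=
  is_open Dt c (aux Dt c t.-1) t.

Definition runlen (c : nat -> bool) (t : nat) : nat :=
  (t - \max_(s < t.+1 | c s) s)%N.

Local Open Scope ring_scope.

Definition cprob {R : realType} (Dt : nat) (p0 q0 : R) (c : nat -> bool)
  (t : nat) : R :=
  \prod_(1 <= s < t.+1)
    (if s == 1%N then (if c s then 1 else 0)
     else if openb Dt c s then (if c s then q0 else 1 - q0)
     else (if c s then p0 else 1 - p0)).

Definition mL {d : measure_display} {Th : measurableType d} {R : realType}
  {Y : Type} (prior : probability Th R) (f : Y -> Th -> R) (y : nat -> Y)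
  (a b : nat) : R :=
  Rintegral prior setT (fun th => \prod_(a <= s < b.+1) f (y s) th).

Definition mP {d : measure_display} {Th : measurableType d} {R : realType}
  {Y : Type} (prior : probability Th R) (f : Y -> Th -> R) (y : nat -> Y)
  (a b : nat) : R :=
  mL prior f y a b / mL prior f y a b.-1.

(* end of the segment starting at change time s (within 1..t) *)
Definition segend (c : nat -> bool) (t s : nat) : nat :=
  (s + find c (iota s.+1 (t - s)))%N.

(* Density of y^{1:t} given the change configuration c^{1:t}: the        *)
(* parameter is constant on segments between changes and drawn           *)
(* independently from the prior at each change, so the conditional       *)
(* density is the product over segments of their marginal likelihoods.   *)
Definition ylik {d : measure_display} {Th : measurableType d} {R : realType}
  {Y : Type} (prior : probability Th R) (f : Y -> Th -> R) (y : nat -> Y)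
  (c : nat -> bool) (t : nat) : R :=
  \prod_(1 <= s < t.+1 | c s) mL prior f y s (segend c t s).

(* configuration c^{1:t} encoded by a t-tuple: c^s = cs_(s-1) *)
Definition cfun (t : nat) (cs : t.-tuple bool) : nat -> bool :=
  fun s => (0 < s)%N && nth false cs s.-1.

Definition joint {d : measure_display} {Th : measurableType d} {R : realType}
  {Y : Type} (Dt : nat) (p0 q0 : R) (prior : probability Th R)
  (f : Y -> Th -> R) (y : nat -> Y) (t : nat) (E : (nat -> bool) -> bool) : R :=
  \sum_(cs : t.-tuple bool)
    (if E (cfun cs) then cprob Dt p0 q0 (cfun cs) t * ylik prior f y (cfun cs) t
     else 0).

Definition Ga {d : measure_display} {Th : measurableType d} {R : realType}
  {Y : Type} (Dt : nat) (p0 q0 : R) (prior : probability Th R)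
  (f : Y -> Th -> R) (y : nat -> Y) (t r' r : nat) : R :=
  joint Dt p0 q0 prior f y t (fun c =>
    [&& runlen c t == r, anom Dt c (t - r),
        c (t - r - 1 - r')%N &
        [forall s : 'I_t, ((t - r - 1 - r' < s) && (s < t - r))%N ==> ~~ c s]]).

Definition Hc {d : measure_display} {Th : measurableType d} {R : realType}
  {Y : Type} (Dt : nat) (p0 q0 : R) (prior : probability Th R)
  (f : Y -> Th -> R) (y : nat -> Y) (t r' : nat) : R :=
  joint Dt p0 q0 prior f y t (fun c =>
    (runlen c t == r') && ~~ anom Dt c (t - r')).

(* Main.v *)
Require Import Defs.
From HB Require Import structures.
From mathcomp Require Import all_boot all_order all_algebra.
From mathcomp Require Import all_classical all_reals all_analysis.
From mathcomp Require Import zify ring.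
Import Order.TTheory GRing.Theory Num.Theory.
Set Implicit Arguments. Unset Strict Implicit. Unset Printing Implicit Defensive.
Local Open Scope ring_scope.

Section Loc.
Variable Dt : nat.

Lemma is_open_loc c c' A A' t :
  (forall u, (u < t)%N -> c u = c' u) -> (forall u, (u < t)%N -> A u = A' u) ->
  is_open Dt c A t = is_open Dt c' A' t.
Proof.
move=> Hc HA; rewrite /is_open; apply: eq_existsb => x.
rewrite Hc ?HA //; congr [&& _, _, _, _ & _].
by apply: eq_forallb => z; rewrite Hc.
Qed.

Lemma aux_loc c c' n : (forall s, (s <= n)%N -> c s = c' s) ->
  aux Dt c n =1 aux Dt c' n.
Proof.
elim: n => [|n IH] Hc s //=.
case: eqP => [->|_]; last by apply: IH => u Hu; apply: Hc; exact: leqW.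
rewrite Hc //; congr andb; apply: is_open_loc => u Hu.
  by apply: Hc; exact: ltnW.
by apply: IH => v Hv; apply: Hc; exact: leqW.
Qed.

Lemma aux_ge c n s : (s <= n)%N -> aux Dt c n s = anom Dt c s.
Proof.
elim: n => [|n IH] Hs; first by move: Hs; rewrite leqn0 => /eqP ->.
rewrite leq_eqVlt in Hs; case/orP: Hs => [/eqP ->|Hs]; first by [].
by rewrite /= (ltn_eqF Hs) IH.
Qed.

Lemma anom_loc c c' n s : (forall s, (s <= n)%N -> c s = c' s) -> (s <= n)%N ->
  anom Dt c s = anom Dt c' s.
Proof.
move=> Hc Hs; rewrite /anom; apply: aux_loc => u Hu; apply: Hc.
exact: leq_trans Hs.
Qed.

Lemma anomS c n : anom Dt c n.+1 = c n.+1 && openb Dt c n.+1.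
Proof. by rewrite /anom /= eqxx. Qed.

Lemma openb_loc c c' t : (forall s, (s <= t)%N -> c s = c' s) ->
  openb Dt c t = openb Dt c' t.
Proof.
move=> Hc; rewrite /openb; apply: is_open_loc => u Hu.
  by apply: Hc; exact: ltnW.
apply: aux_loc => v Hv; apply: Hc; lia.
Qed.

Lemma is_open_last (c A : nat -> bool) t s0 : (s0 < t)%N -> c s0 ->
  (forall s, (s0 < s < t)%N -> c s = false) ->
  is_open Dt c A t = [&& (2 <= s0)%N, (t - Dt <= s0)%N & ~~ A s0].
Proof.
move=> Hs0 Hc Hf; apply/existsP/and3P.
- case=> x /and5P[H2 HD Hcx HA /forallP Hx].
  have Exs : nat_of_ord x = s0.
    case: (ltngtP x s0) => // H.
      by move: (Hx (Ordinal Hs0)); rewrite /= H Hc.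
    by move: Hcx; rewrite Hf // H ltn_ord.
  by rewrite -Exs.
- case=> H2 HD HA; exists (Ordinal Hs0); rewrite /= H2 HD Hc HA /=.
  apply/forallP => s; apply/implyP => Hs; rewrite Hf //.
  by rewrite Hs ltn_ord.
Qed.

Lemma runlenP (c : nat -> bool) t r s0 : (r < t)%N -> s0 = (t - r)%N ->
  (runlen c t == r) <-> (c s0 /\ forall s, (s0 < s <= t)%N -> c s = false).
Proof.
move=> Hr ->; rewrite /runlen.
set M := (\max_(s < t.+1 | c s) s)%N.
have HM : (M <= t)%N by apply/bigmax_leqP => i _; rewrite -ltnS.
split.
- move=> /eqP HtM.
  have EM : M = (t - r)%N by lia.
  split.
    apply/negPn/negP => Hn.
    have : (M <= M.-1)%N.
      apply/bigmax_leqP => i Hi.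
      have := leq_bigmax_cond (P := fun i : 'I_t.+1 => c i) (F := fun i : 'I_t.+1 => nat_of_ord i) i Hi.
      rewrite -/M => HiM.
      have : nat_of_ord i != M by apply/eqP => E; move: Hi; rewrite E EM (negbTE Hn).
      lia.
    lia.
  move=> s /andP[H1 H2]; apply/negP => Hcs.
  have Hs : (s < t.+1)%N by [].
  have := leq_bigmax_cond (P := fun i : 'I_t.+1 => c i) (F := fun i : 'I_t.+1 => nat_of_ord i) (Ordinal Hs) Hcs.
  rewrite -/M /=; lia.
- case=> Hc Hf.
  have Hs : (t - r < t.+1)%N by lia.
  have H1 := leq_bigmax_cond (P := fun i : 'I_t.+1 => c i) (F := fun i : 'I_t.+1 => nat_of_ord i) (Ordinal Hs) Hc.
  have H2 : (M <= t - r)%N.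
    apply/bigmax_leqP => i Hi; rewrite leqNgt; apply/negP => Hlt.
    by move: Hi; rewrite Hf // Hlt -ltnS ltn_ord.
  rewrite -/M /= in H1; apply/eqP; lia.
Qed.

Lemma forall_ordP t lo hi (c : nat -> bool) : (hi <= t)%N ->
  reflect (forall s, (lo < s < hi)%N -> c s = false)
          [forall s : 'I_t, ((lo < s) && (s < hi))%N ==> ~~ c s].
Proof.
move=> Ht; apply: (iffP forallP).
- move=> H s Hs; have Hst : (s < t)%N by case/andP: Hs => _ Hs; exact: leq_trans Hs Ht.
  by apply/negbTE; move: (H (Ordinal Hst)) => /implyP; apply.
- by move=> H s; apply/implyP => Hs; rewrite H.
Qed.

End Loc.

Definition ext (c : nat -> bool) (n : nat) (b : bool) : nat -> bool :=
  fun s => if s == n.+1 then b else c s.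

Lemma ext_le c n b s : (s <= n)%N -> ext c n b s = c s.
Proof. by move=> H; rewrite /ext; case: eqP => // E; move: H; rewrite E ltnn. Qed.

Lemma ext_n c n b : ext c n b n.+1 = b.
Proof. by rewrite /ext eqxx. Qed.

Lemma segend_ext c n b s : (s <= n)%N ->
  segend (ext c n b) n.+1 s =
  (if has c (iota s.+1 (n - s)) then segend c n s else n + ~~ b)%N.
Proof.
move=> Hs; rewrite /segend.
have -> : (n.+1 - s = (n - s) + 1)%N by lia.
rewrite iotaD find_cat.
have Heq : {in iota s.+1 (n - s), ext c n b =1 c}.
  by move=> x; rewrite mem_iota => Hx; apply: ext_le; lia.
rewrite (eq_in_has Heq) (eq_in_find Heq).
case: ifP => // Hh; rewrite size_iota /=.
have -> : (s.+1 + (n - s) = n.+1)%N by lia.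
rewrite ext_n; clear Heq; case: b => /=; lia.
Qed.

Lemma segend_none c n s : (s <= n)%N -> ~~ has c (iota s.+1 (n - s)) ->
  segend c n s = n.
Proof. by move=> Hs Hh; rewrite /segend hasNfind // size_iota; lia. Qed.

Definition rc n (p : n.-tuple bool * bool) : n.+1.-tuple bool :=
  Tuple (rcons_tupleP p.1 p.2).

Definition rsplit n (cs : n.+1.-tuple bool) : n.-tuple bool * bool :=
  (Tuple (belast_tupleP (thead cs) (behead_tuple cs)),
   last (thead cs) (behead cs)).

Lemma rsplitK n : cancel (@rsplit n) (@rc n).
Proof.
move=> cs; apply: val_inj => /=.
case: cs => [[|x s] //= Hs].
by rewrite -lastI.
Qed.

Lemma rc_inj n : injective (@rc n).
Proof.
case=> [s1 b1] [s2 b2] /(congr1 val) /= /eqP; rewrite eqseq_rcons => /andP[/eqP e /eqP ->].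
by congr pair; apply: val_inj.
Qed.

Lemma rc_bij n : bijective (@rc n).
Proof.
exists (@rsplit n); last exact: rsplitK.
by move=> p; apply: rc_inj; rewrite rsplitK.
Qed.

Lemma sum_tuple_rc (R : realType) n (F : n.+1.-tuple bool -> R) :
  \sum_(cs : n.+1.-tuple bool) F cs =
  \sum_(cs : n.-tuple bool) (F (rc (cs, true)) + F (rc (cs, false))).
Proof.
rewrite (reindex (@rc n)); last by apply: onW_bij; exact: rc_bij.
rewrite -(pair_bigA _ (fun cs b => F (rc (cs, b)))) /=.
by apply: eq_bigr => cs _; rewrite big_bool.
Qed.

Lemma cfun_rc n (cs : n.-tuple bool) b :
  cfun (rc (cs, b)) = ext (cfun cs) n b.
Proof.
apply: boolp.funext => s; rewrite /cfun /ext /= nth_rcons size_tuple.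
case: s => [|s] //=.
rewrite eqSS; have [H|H] := ltnP s n.
  by rewrite (ltn_eqF H).
rewrite nth_default ?size_tuple //; by case: eqP.
Qed.

Lemma int0_mul (R : realType) (d : measure_display) (Th : measurableType d)
  (mu : {measure set Th -> \bar R}) (g h : Th -> R) :
  (forall x, 0 <= g x) -> (forall x, 0 <= h x) ->
  mu.-integrable setT (fun x => (g x)%:E) ->
  mu.-integrable setT (fun x => (g x * h x)%:E) ->
  Rintegral mu setT g = 0 -> Rintegral mu setT (fun x => g x * h x) = 0.
Proof.
move=> g0 h0 ig igh.
rewrite /Rintegral => /eqP; rewrite fine_eq0 ?integrable_fin_num // => /eqP i0.
have : (\int[mu]_(x in setT) `|(g x)%:E| = 0)%E.
  rewrite -i0; apply: eq_integral => x _; rewrite gee0_abs // lee_fin //.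
move/(ae_eq_integral_abs mu measurableT (measurable_int _ ig)) => ae0.
rewrite (ae_eq_integral (cst 0%E)) //.
- by rewrite integral0.
- exact: (measurable_int _ igh).
- apply: filterS ae0 => x H /H /= [gx0].
  by rewrite gx0 mul0r.
Qed.

Section Lik.
Variables (R : realType) (d : measure_display) (Th : measurableType d)
  (prior : probability Th R) (Y : Type) (f : Y -> Th -> R) (y : nat -> Y).
Variables (Dt : nat) (p0 q0 : R).

Lemma ylik_ext_true c n :
  ylik prior f y (ext c n true) n.+1 = ylik prior f y c n * mL prior f y n.+1 n.+1.
Proof.
rewrite /ylik big_mkcond big_nat_recr //= [in RHS]big_mkcond /=.
congr (_ * _); last by rewrite ext_n /segend subnn /= addn0.
apply: eq_big_nat => s /andP[_ Hs]; rewrite ext_le //.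
case: ifP => // Hc; rewrite segend_ext //.
case: ifP => // Hh; rewrite segend_none ?Hh // ?addn0 //.
Qed.

Lemma ylik_split (c : nat -> bool) m s0 : (1 <= s0 <= m)%N -> c s0 ->
  (forall s, (s0 < s <= m)%N -> c s = false) ->
  ylik prior f y c m =
  (\prod_(1 <= s < s0 | c s) mL prior f y s (segend c m s)) * mL prior f y s0 m.
Proof.
move=> /andP[H1 H2] Hc Hf; rewrite /ylik (big_cat_nat (n := s0)) //=; last by lia.
rewrite [X in _ * X]big_ltn_cond /=; last by lia.
rewrite Hc segend_none //; last first.
  apply/hasPn => x; rewrite mem_iota => Hx; rewrite Hf //; lia.
congr (_ * _); rewrite big_nat_cond big1 ?mulr1 //.
move=> i /andP[/andP[Hi1 Hi2] Hci]; move: Hci; rewrite Hf //; lia.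
Qed.

Lemma cprob_ext c n b : (1 <= n)%N ->
  cprob Dt p0 q0 (ext c n b) n.+1 = cprob Dt p0 q0 c n *
   (if openb Dt (ext c n b) n.+1 then (if b then q0 else 1 - q0)
    else (if b then p0 else 1 - p0)).
Proof.
move=> Hn; rewrite /cprob big_nat_recr //=.
have -> : (n.+1 == 1)%N = false by lia.
rewrite ext_n; congr (_ * _).
apply: eq_big_nat => s /andP[H1 Hs].
rewrite ext_le //; congr (if _ then _ else _).
rewrite (@openb_loc Dt (ext c n b) c s) // => u Hu; apply: ext_le; lia.
Qed.


Definition EvG t r' r : (nat -> bool) -> bool := fun c =>
  [&& runlen c t == r, anom Dt c (t - r), c (t - r - 1 - r')%N &
      [forall s : 'I_t, ((t - r - 1 - r' < s) && (s < t - r))%N ==> ~~ c s]].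

Definition EvH t r' : (nat -> bool) -> bool := fun c =>
  (runlen c t == r') && ~~ anom Dt c (t - r').

Definition term t (E : (nat -> bool) -> bool) c :=
  if E c then cprob Dt p0 q0 c t * ylik prior f y c t else 0.

Lemma joint_step n E : joint Dt p0 q0 prior f y n.+1 E =
  \sum_(cs : n.-tuple bool)
     (term n.+1 E (ext (cfun cs) n true) + term n.+1 E (ext (cfun cs) n false)).
Proof. by rewrite /joint sum_tuple_rc; apply: eq_bigr => cs _; rewrite !cfun_rc. Qed.

Lemma step0_false c n r' :
  term n.+1 (EvG n.+1 r' 0) (ext c n false) = 0.
Proof.
rewrite /term; case: ifP => // /and4P[H _ _ _].
move: H => /(runlenP _ (ltn0Sn n) (erefl _)) [].
by rewrite subn0 ext_n.
Qed.

Lemma step0_true c n r' : (2 <= n)%N -> (r' <= n - 2)%N -> (r' <= Dt - 1)%N ->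
  (1 <= Dt)%N ->
  term n.+1 (EvG n.+1 r' 0) (ext c n true) =
  term n (EvH n r') c * mL prior f y n.+1 n.+1 * q0.
Proof.
move=> Hn Hr HrD HD.
set c' := ext c n true.
set s0 := (n - r')%N.
have Hs0n : (s0 <= n)%N by lia.
have Hc's : forall s, (s <= n)%N -> c' s = c s by move=> s Hs; exact: ext_le.
have Hc'n : c' n.+1 = true by exact: ext_n.
have Hop : forall (P : Prop), (c s0 /\ forall s, (s0 < s <= n)%N -> c s = false) ->
   openb Dt c' n.+1 = ~~ anom Dt c s0.
  move=> _ [Hc Hf]; rewrite /openb /= (@is_open_last Dt c' (aux Dt c' n) n.+1 s0) //.
  - rewrite aux_ge // (@anom_loc Dt c' c n s0) //.
    have -> : (2 <= s0)%N by lia.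
    by have -> : (n.+1 - Dt <= s0)%N by lia.
  - by rewrite Hc's.
  - by move=> s Hs; rewrite Hc's ?Hf //; lia.
have HE : EvG n.+1 r' 0 c' = EvH n r' c.
  rewrite /EvG /EvH subn0 anomS.
  have -> : (n.+1 - 1 - r' = s0)%N by lia.
  have Hr'n : (r' < n)%N by lia.
  have [P|nP] := boolp.pselect (c s0 /\ forall s, (s0 < s <= n)%N -> c s = false).
  - have -> : runlen c n == r' by apply/(runlenP c Hr'n (erefl _)).
    have -> : runlen c' n.+1 == 0%N.
      apply/(runlenP c' (ltn0Sn n)); first by rewrite subn0.
      by split => [|s Hs]; [rewrite Hc'n | lia].
    rewrite (Hop True P) Hc'n (Hc's s0 Hs0n) -/s0 /=; case: P => -> Hf /=.
    case: (anom _ _ _) => //=.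
    have : [forall s : 'I_n.+1, ((s0 < s) && (s < n.+1))%N ==> ~~ c' s].
      apply/(forall_ordP s0 c' (leqnn _)) => s Hs.
      by rewrite Hc's ?Hf //; lia.
    by move=> ->.
  - have -> : runlen c n == r' = false.
      by apply/negbTE/negP => /(runlenP c Hr'n (erefl _)) H; apply: nP.
    rewrite /=; apply/negbTE/negP => /and4P[_ _ H1 /(forall_ordP s0 c' (leqnn _)) H2].
    apply: nP; split; first by rewrite -Hc's.
    by move=> s Hs; rewrite -Hc's ?H2 //; lia.
rewrite /term HE; case: ifP => HH; last by rewrite !mul0r.
have Hopen : openb Dt c' n.+1.
  by move: HH; rewrite -HE => /and4P[_]; rewrite subn0 anomS => /andP[].
rewrite cprob_ext; last lia.
rewrite Hopen ylik_ext_true; ring.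
Qed.



Lemma mL_ratio a b : (1 <= a <= b)%N -> (forall v th, 0 <= f v th) ->
  prior.-integrable setT (fun th => (\prod_(a <= s < b.+1) f (y s) th)%:E) ->
  prior.-integrable setT (fun th => (\prod_(a <= s < b.+2) f (y s) th)%:E) ->
  mL prior f y a b * (mL prior f y a b.+1 / mL prior f y a b) = mL prior f y a b.+1.
Proof.
move=> /andP[Ha Hb] f0 i1 i2.
have [H0|H0] := eqVneq (mL prior f y a b) 0; last by rewrite mulrC divfK.
rewrite H0 mul0r; symmetry; move: H0 i2; rewrite /mL.
have -> : (fun th => \prod_(a <= s < b.+2) f (y s) th) =
          (fun th => (\prod_(a <= s < b.+1) f (y s) th) * f (y b.+1) th).
  by apply: boolp.funext => th; rewrite big_nat_recr //; lia.
move=> H0 i2; apply: int0_mul => //.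
  by move=> x; apply: prodr_ge0.
suff -> : (fun x => (\prod_(a <= s < b.+1) f (y s) x * f (y b.+1) x)%:E) =
          (fun th => (\prod_(a <= s < b.+2) f (y s) th)%:E) by [].
by apply: boolp.funext => th; rewrite [in RHS]big_nat_recr //; lia.
Qed.

Lemma steppos_true c n r r' : (1 <= r)%N -> (r <= n)%N ->
  term n.+1 (EvG n.+1 r' r) (ext c n true) = 0.
Proof.
move=> Hr1 Hr; rewrite /term; case: ifP => // /and4P[H _ _ _].
have Hrn : (r < n.+1)%N by lia.
move: H => /(runlenP (ext c n true) Hrn (erefl _)) [_ Hf].
by move: (Hf n.+1); rewrite ext_n => H; have := H ltac:(lia).
Qed.

Lemma steppos_false c n r r' :
  mL prior f y (n.+1 - r) n * (mL prior f y (n.+1 - r) n.+1 / mL prior f y (n.+1 - r) n)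
    = mL prior f y (n.+1 - r) n.+1 ->
  (1 <= r)%N -> (r <= n - 2)%N -> (r' <= n.+1 - r - 3)%N ->
  term n.+1 (EvG n.+1 r' r) (ext c n false) =
  term n (EvG n r' r.-1) c * mP prior f y (n.+1 - r) n.+1 * (1 - p0).
Proof.
move=> Hm Hr1 Hr Hr'.
set c' := ext c n false.
set s0 := (n.+1 - r)%N in Hm *.
have Hs0n : (s0 <= n)%N by lia.
have Hc's : forall s, (s <= n)%N -> c' s = c s by move=> s Hs; exact: ext_le.
have Hc'n : c' n.+1 = false by exact: ext_n.
have Hrn : (r < n.+1)%N by lia.
have Hrn' : (r.-1 < n)%N by lia.
have Es0 : s0 = (n - r.-1)%N by lia.
have E2 : (n - r.-1)%N = s0 by lia.
have HE : EvG n.+1 r' r c' = EvG n r' r.-1 c.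
  rewrite /EvG -/s0 E2.
  rewrite (@anom_loc Dt c' c n s0) // (Hc's (s0 - 1 - r')%N); last lia.
  congr [&& _, _, _ & _].
  - apply/idP/idP.
    + move/(runlenP c' Hrn (erefl _)) => [Hc Hf].
      apply/(runlenP c Hrn' Es0); split; first by rewrite -Hc's.
      by move=> s Hs; rewrite -Hc's ?Hf //; lia.
    + move/(runlenP c Hrn' Es0) => [Hc Hf].
      apply/(runlenP c' Hrn (erefl _)); split; first by rewrite Hc's.
      move=> s Hs; have [Hsn|Hsn] := leqP s n; first by rewrite Hc's ?Hf //; lia.
      by have -> : s = n.+1 by lia.
  - have Hs1 : (s0 <= n.+1)%N by lia.
    apply/(forall_ordP _ c' Hs1)/(forall_ordP _ c Hs0n) => H s Hs.
      by rewrite -Hc's ?H //; lia.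
    by rewrite Hc's ?H //; lia.
rewrite /term HE; case: ifP => HH; last by rewrite !mul0r.
move: HH; rewrite /EvG E2 => /and4P[/(runlenP c Hrn' Es0) [Hc Hf] Ha _ _].
have Hopen : openb Dt c' n.+1 = false.
  rewrite /openb /= (@is_open_last Dt c' (aux Dt c' n) n.+1 s0) //.
  - by rewrite aux_ge // (@anom_loc Dt c' c n s0) // Ha !andbF.
  - by rewrite Hc's.
  - by move=> s Hs; rewrite Hc's ?Hf //; lia.
rewrite cprob_ext; last lia.
rewrite Hopen.
have Hs01 : (1 <= s0 <= n.+1)%N by lia.
have Hs02 : (1 <= s0 <= n)%N by lia.
rewrite (@ylik_split c' n.+1 s0 Hs01); first last.
- move=> s Hs; have [Hsn|Hsn] := leqP s n; first by rewrite Hc's ?Hf //; lia.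
  by have -> : s = n.+1 by lia.
- by rewrite Hc's.
rewrite (@ylik_split c n s0 Hs02 Hc Hf).
have HQ : \prod_(1 <= s < s0 | c' s) mL prior f y s (segend c' n.+1 s) =
          \prod_(1 <= s < s0 | c s) mL prior f y s (segend c n s).
  rewrite big_mkcond [RHS]big_mkcond; apply: eq_big_nat => s Hs.
  rewrite Hc's; last lia.
  case: ifP => // Hcs; rewrite segend_ext; last lia.
  have -> : has c (iota s.+1 (n - s)) by apply/hasP; exists s0; [rewrite mem_iota; lia|].
  by [].
rewrite HQ /mP /=.
set X := (mL prior f y s0 n.+1 / _).
rewrite -[in LHS]Hm -/X; clearbody X; ring.
Qed.


Lemma openb_small c t : (t <= 2)%N -> openb Dt c t = false.
Proof.
move=> Ht; apply/negbTE/existsP => [[x /and5P[H2 _ _ _ _]]].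
have := ltn_ord x; lia.
Qed.

Lemma sum_tuple0 (F : 0.-tuple bool -> R) :
  \sum_(cs : 0.-tuple bool) F cs = F [tuple].
Proof.
rewrite (big_pred1 [tuple]) // => cs /=.
by apply/esym/eqP; exact: tuple0.
Qed.

Lemma stepH_false c n : term n.+1 (EvH n.+1 0) (ext c n false) = 0.
Proof.
rewrite /term; case: ifP => // /andP[H _].
move: H => /(runlenP _ (ltn0Sn n) (erefl _)) [].
by rewrite subn0 ext_n.
Qed.

Lemma Hc20 : Hc Dt p0 q0 prior f y 2 0 =
  mL prior f y 1 1 * mL prior f y 2 2 * p0.
Proof.
have -> : Hc Dt p0 q0 prior f y 2 0 = joint Dt p0 q0 prior f y 2 (EvH 2 0) by [].
rewrite joint_step sum_tuple_rc sum_tuple0 !cfun_rc !stepH_false !addr0.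
have Ht : forall b1, term 2 (EvH 2 0) (ext (ext (cfun [tuple]) 0 b1) 1 true) =
   cprob Dt p0 q0 (ext (cfun [tuple]) 0 b1) 1 * p0 *
   (ylik prior f y (ext (cfun [tuple]) 0 b1) 1 * mL prior f y 2 2).
  move=> b1; rewrite /term.
  have -> : EvH 2 0 (ext (ext (cfun [tuple]) 0 b1) 1 true).
    rewrite /EvH subn0 anomS openb_small // andbF andbT.
    apply/(runlenP _ (ltn0Sn 1) (erefl _)); split; first by rewrite ext_n.
    move=> s Hs; lia.
  by rewrite cprob_ext // openb_small // ylik_ext_true.
rewrite !Ht /cprob /ylik !big_nat1 /=.
rewrite /segend /=.
rewrite !big_mkcond !big_nat1 /= addn0 mul0r mul0r addr0 mul1r; ring.
Qed.

Lemma Ga_step0 n r' : (2 <= n)%N -> (r' <= n - 2)%N -> (r' <= Dt - 1)%N ->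
  (1 <= Dt)%N ->
  Ga Dt p0 q0 prior f y n.+1 r' 0 =
  Hc Dt p0 q0 prior f y n r' * mL prior f y n.+1 n.+1 * q0.
Proof.
move=> H1 H2 H3 H4.
have -> : Ga Dt p0 q0 prior f y n.+1 r' 0 =
  joint Dt p0 q0 prior f y n.+1 (EvG n.+1 r' 0) by [].
rewrite joint_step (eq_bigr (fun cs => term n (EvH n r') (cfun cs) *
   mL prior f y n.+1 n.+1 * q0)); last first.
  by move=> cs _; rewrite step0_true // step0_false addr0.
by rewrite -!mulr_suml.
Qed.

Lemma Ga_steppos T n r r' : (1 <= r)%N -> (r <= n - 2)%N ->
  (r' <= n.+1 - r - 3)%N -> (n.+1 <= T)%N ->
  (forall v th, 0 <= f v th) ->
  (forall a b : nat, (1 <= a)%N -> (a <= b)%N -> (b <= T)%N ->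
     prior.-integrable setT
       (fun th => (\prod_(a <= s < b.+1) f (y s) th)%:E)) ->
  Ga Dt p0 q0 prior f y n.+1 r' r =
  Ga Dt p0 q0 prior f y n r' r.-1 * mP prior f y (n.+1 - r) n.+1 * (1 - p0).
Proof.
move=> H1 H2 H3 HT f0 Hint.
have Hm := @mL_ratio (n.+1 - r) n ltac:(apply/andP; split; lia) f0
   (Hint (n.+1 - r)%N n ltac:(lia) ltac:(lia) ltac:(lia))
   (Hint (n.+1 - r)%N n.+1 ltac:(lia) ltac:(lia) ltac:(lia)).
have -> : Ga Dt p0 q0 prior f y n.+1 r' r =
  joint Dt p0 q0 prior f y n.+1 (EvG n.+1 r' r) by [].
rewrite joint_step (eq_bigr (fun cs => term n (EvG n r' r.-1) (cfun cs) *
   mP prior f y (n.+1 - r) n.+1 * (1 - p0))); last first.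
  by move=> cs _; rewrite steppos_true ?steppos_false // ?add0r //; lia.
by rewrite -!mulr_suml.
Qed.

End Lik.

Unset Implicit Arguments.

Theorem theorem3 (R : realType) (T Dt : nat) (p0 q0 : R)
  (d : measure_display) (Th : measurableType d) (prior : probability Th R)
  (Y : Type) (f : Y -> Th -> R) (y : nat -> Y) :
  (3 <= T)%N -> (1 <= Dt)%N ->
  0 < p0 < 1 -> 0 < q0 < 1 ->
  (forall v th, 0 <= f v th) ->
  (forall a b : nat, (1 <= a)%N -> (a <= b)%N -> (b <= T)%N ->
     prior.-integrable setT
       (fun th => (\prod_(a <= s < b.+1) f (y s) th)%:E)) ->
  Ga Dt p0 q0 prior f y 3 0 0
    = mL prior f y 1 1 * mL prior f y 2 2 * mL prior f y 3 3 * p0 * q0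
  /\
  (forall t r r' : nat, (3 < t)%N -> (t <= T)%N -> (r <= t - 3)%N ->
     (r' <= minn (Dt - 1) (t - r - 3))%N ->
     Ga Dt p0 q0 prior f y t r' r =
       (if (0 < r)%N then
          Ga Dt p0 q0 prior f y t.-1 r' r.-1 * mP prior f y (t - r) t * (1 - p0)
        else
          Hc Dt p0 q0 prior f y t.-1 r' * mL prior f y t t * q0)).
Proof.
move=> HT HD _ _ f0 Hint; split.
  rewrite (@Ga_step0 R d Th prior Y f y Dt p0 q0 2 0) ?Hc20; try lia.
  ring.
move=> [|n] r r' Ht HtT Hr Hr' //=.
case: r Hr Hr' => [|r] Hr Hr' /=.
  rewrite (@Ga_step0 R d Th prior Y f y Dt p0 q0 n r') //; lia.
rewrite (@Ga_steppos R d Th prior Y f y Dt p0 q0 T n r.+1 r') //; lia.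
Qed.
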